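(* Let $b\in\mathbb{R}$, $c>0$, $n\in\mathbb{N}$, and $R_b(x)=\sum_{i=1}^n x_i\ln x_i+b\sum_{i=1}^n x_i$ for $x\in[0,+\infty)^n$ (with $0\ln0=0$). If $b+\ln c-\ln n>1$, then $$\mathrm{Vol}\big(\{x\in[0,+\infty)^n: R_b(x)<c\}\big)\le\frac{1}{n!\,n}\cdot\frac{2^nc^n}{(b+\ln c-\ln n)^n}.$$ *)

(* Defs.v *)
From HB Require Import structures.
From mathcomp Require Import all_boot all_order all_algebra.
From mathcomp Require Import all_classical all_reals all_analysis.
Set Implicit Arguments. Unset Strict Implicit. Unset Printing Implicit Defensive.
Import Order.TTheory GRing.Theory Num.Theory.
Local Open Scope classical_set_scope.
Local Open Scope ring_scope.

Definition box (R : realType) (n : nat) (a b : 'I_n -> R) : set ('I_n -> R) :=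
  [set x | forall i, a i <= x i <= b i].

(* elementary volume of the box; the covers below require a i <= b i *)
Definition box_vol (R : realType) (n : nat) (a b : 'I_n -> R) : R :=
  \prod_(i < n) (b i - a i).

(* n-dimensional Lebesgue (outer) measure: infimum of the total volume of
   countable covers by closed boxes. On Lebesgue-measurable sets this is the
   Lebesgue measure Vol. *)
Definition Vol (R : realType) (n : nat) (A : set ('I_n -> R)) : \bar R :=
  ereal_inf [set v : \bar R | exists (a b : nat -> 'I_n -> R),
     [/\ forall k i, a k i <= b k i,
         A `<=` \bigcup_k box (a k) (b k) &
         v = (\sum_(0 <= k <oo) (box_vol (a k) (b k))%:E)%E]].

Definition xlnx (R : realType) (t : R) : R := if t == 0 then 0 else t * ln t.

Definition Rb (R : realType) (n : nat) (b : R) (x : 'I_n -> R) : R :=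
  \sum_(i < n) xlnx (x i) + b * \sum_(i < n) x i.

(* Main.v *)
Require Import Defs.
From HB Require Import structures.
From mathcomp Require Import all_boot all_order all_algebra.
From mathcomp Require Import all_classical all_reals all_analysis.
From mathcomp Require Import ring lra.
Import Order.TTheory GRing.Theory Num.Theory.
Local Open Scope classical_set_scope.
Local Open Scope ring_scope.

Lemma e_lb (R : realType) : 50/19 <= expR (1:R).
Proof.
rewrite [X in expR X](_ : _ = 15%:R * 15%:R^-1); last by rewrite mulfV.
rewrite expRM_natl.
apply: le_trans (_ : (1 + 15%:R^-1) ^+ 15 <= _); last first.
  by apply: lerXn2r; rewrite ?nnegrE ?expR_ge0 ?expR_ge1Dx //.
lra.
Qed.

Lemma ln_le_subr1 (R : realType) (y : R) : 0 < y -> ln y <= y - 1.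
Proof.
move=> y0; have h : ln (1 + (y - 1)) <= y - 1 by apply: le_ln1Dx; lra.
have e : 1 + (y - 1) = y by lra.
by rewrite e in h.
Qed.

Lemma ln_lin (R : realType) (r : R) : 0 < r -> ln r <= 19/50 * r.
Proof.
move=> r0.
have -> : r = (19/50 * r) * (50/19) by field.
rewrite lnM ?posrE; [|lra|lra].
have h1 := @ln_le_subr1 R (19/50 * (19/50 * r * (50 / 19))).
have h2 : ln (50/19 : R) <= 1.
  rewrite -[leRHS](expRK 1) ler_ln ?posrE ?expR_gt0 ?e_lb //; lra.
have h3 : ln (19 / 50 * r) <= 19/50 * r - 1 by apply: ln_le_subr1; lra.
lra.
Qed.

Lemma keyL (R : realType) (L : R) : 1 < L -> L <= 69/50 * (L + ln (69/50) - ln L).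
Proof.
move=> L1.
have h := @ln_lin R (L / (69/50)) ltac:(apply: divr_gt0; lra).
rewrite ln_div ?posrE in h; [|lra|lra].
have e : 19 / 50 * (L / (69 / 50)) = 19/69 * L :> R by field.
rewrite e in h.
lra.
Qed.

Lemma pow_ineq (R : realType) (n : nat) : n%:R * (693/500 : R) ^+ n <= 2 ^+ n.
Proof.
elim: n => [|n IH]; first by rewrite mul0r expr0.
have [n2|n3] := leqP n 2.
  case: n n2 IH => [|[|[|]]] // _ _; rewrite /=; lra.
have P0 : 0 <= (693/500 : R) ^+ n by apply: exprn_ge0; lra.
have n3' : 3 <= n%:R :> R by rewrite (ler_nat R 3 n).
rewrite !exprS -natr1.
nra.
Qed.
Lemma tangent (R : realType) (y a : R) : 0 <= y -> 0 < a ->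
  y * ln a + y - a <= xlnx y.
Proof.
move=> y0 a0; rewrite /xlnx.
have [->|yn0] := eqVneq y 0; first by rewrite mul0r; lra.
have yp : 0 < y by rewrite lt_def yn0.
have h := @ln_le_subr1 R (a / y) ltac:(exact: divr_gt0).
rewrite ln_div ?posrE // in h.
have h2 : y * (ln a - ln y) <= y * (a / y - 1) by rewrite ler_wpM2l // ltW.
have e : y * (a / y - 1) = a - y by field; rewrite gt_eqF.
lra.
Qed.

Lemma contain (R : realType) (b c : R) (n : nat) (x : 'I_n -> R) :
  (0 < n)%N -> 0 < c -> 1 < b + ln c - ln n%:R ->
  (forall i, 0 <= x i) -> Rb b x < c ->
  \sum_(i < n) x i < 69/50 * c / (b + ln c - ln n%:R).
Proof.
move=> n0 c0; set L := b + ln c - ln n%:R => L1 x0 hR.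
rewrite ltNge; apply/negP => hs.
set s := \sum_(i < n) x i in hs.
set t := 69/50 * c / L in hs.
have L0 : 0 < L by lra.
have t0 : 0 < t by rewrite /t; apply: divr_gt0 => //; lra.
have s0 : 0 < s by lra.
have n0' : 0 < n%:R :> R by rewrite ltr0n.
set a := s / n%:R.
have a0 : 0 < a by exact: divr_gt0.
have h1 : s * ln a <= \sum_(i < n) xlnx (x i).
  apply: le_trans (_ : \sum_(i < n) (x i * ln a + x i - a) <= _); last first.
    by apply: ler_sum => i _; apply: tangent.
  rewrite big_split /= big_split /= -mulr_suml sumrN sumr_const card_ord.
  rewrite -/s -mulr_natr /a divfK ?gt_eqF //; lra.
have h2 : ln a = ln s - ln n%:R by rewrite /a ln_div ?posrE.
have h3 : ln t = ln (69/50) + ln c - ln L.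
  rewrite /t ln_div ?posrE ?lnM ?posrE //.
  all: try lra.

have h4 : ln t <= ln s by rewrite ler_ln ?posrE.
have k := @keyL _ _ L1.
set G := L + ln (69/50) - ln L in k.
have G0 : 0 < G by lra.
have hL : L = b + ln c - ln n%:R by [].
have hG : G = L + ln (69/50) - ln L by [].
have h5 : G <= ln s - ln n%:R + b by lra.
have h6 : s * G <= s * (ln s - ln n%:R + b) by rewrite ler_wpM2l // ltW.
have h7 : t * G <= s * G by rewrite ler_wpM2r // ltW.
have h8 : c <= t * G.
  have e : t * G = c * (69/50 * G) / L by rewrite /t; field; rewrite gt_eqF.
  by rewrite e ler_pdivlMr // ler_wpM2l // ltW.
move: hR; rewrite /Rb -/s => hR.
rewrite h2 in h1.

nra.
Qed.
Fixpoint gen (n m : nat) : seq (seq nat) :=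
  match n with
  | 0 => [:: [::]]
  | n'.+1 => flatten [seq [seq j :: l | l <- gen n' (m - j)] | j <- iota 0 m.+1]
  end.

Lemma gen_S n m : gen n.+1 m = flatten [seq [seq j :: l | l <- gen n (m - j)] | j <- iota 0 m.+1].
Proof. by []. Qed.

Lemma gen_mem n : forall (l : seq nat) m, size l = n -> (sumn l <= m)%N -> l \in gen n m.
Proof.
elim: n => [|n IH] [|j l] m // [sl] hs.
rewrite gen_S; apply/flatten_mapP; exists j.
  rewrite mem_iota /= add0n ltnS.
  exact: leq_trans (leq_addr _ _) hs.
rewrite mem_map; last by move=> ? ? [].
apply: IH => //; rewrite leq_subRL //.
exact: leq_trans (leq_addr _ _) hs.
Qed.

Lemma gen_sizeS n m : size (gen n.+1 m) = (\sum_(0 <= j < m.+1) size (gen n (m - j)))%N.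
Proof.
rewrite gen_S size_flatten sumnE /shape big_map /index_iota subn0.
rewrite big_map; by apply: eq_bigr => j _; rewrite size_map.
Qed.

Lemma key_ineq (R : realType) (n : nat) (a : R) : 0 <= a ->
  n.+1%:R * a ^+ n <= (a + 1) ^+ n.+1 - a ^+ n.+1.
Proof.
move=> a0; elim: n => [|n IH]; first by rewrite !expr1 expr0; lra.
have P0 : 0 <= a ^+ n by rewrite exprn_ge0.
rewrite (exprS (a+1) n.+1) (exprS a n.+1) (exprS a n).
rewrite (exprS a n) in IH.
set P := a ^+ n in P0 IH *; set X := (a + 1) ^+ n.+1 in IH *.
have H1 : 0 <= (a + 1) * (X - a * P - n.+1%:R * P).
  by apply: mulr_ge0; lra.
have H2 : 0 <= n.+1%:R * P by apply: mulr_ge0.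
rewrite -[n.+2]addn1 natrD.
nra.
Qed.

Lemma tele (R : realType) (n : nat) (m : nat) :
  n.+1%:R * (\sum_(0 <= j < m.+1) ((m - j + n)%:R : R) ^+ n)
    <= ((m + n).+1%:R) ^+ n.+1 - (n%:R) ^+ n.+1.
Proof.
elim: m => [|m IH].
  rewrite big_nat1 sub0n add0n.
  by have := @key_ineq R n n%:R (ler0n R n); rewrite -natr1.
rewrite big_nat_recl //= subn0.
under eq_bigr do rewrite subSS.
rewrite mulrDr.
have := @key_ineq R n (m+n).+1%:R (ler0n R (m + n).+1).
rewrite -(natr1 (m+n).+1) addSn.
lra.
Qed.

Lemma gen_size (R : realType) n : forall m,
  (size (gen n m))%:R * n`!%:R <= ((m + n)%:R : R) ^+ n.
Proof.
elim: n => [|n IH] m; first by rewrite /= expr0 mul1r.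
rewrite gen_sizeS natr_sum factS natrM mulrCA mulr_suml.
apply: le_trans (_ : n.+1%:R * (\sum_(0 <= j < m.+1) ((m - j + n)%:R : R) ^+ n) <= _).
  rewrite ler_wpM2l //; apply: ler_sum => j _; exact: IH.
apply: le_trans (tele R n m) _.
rewrite addnS lerBlDr lerDl; exact: exprn_ge0.
Qed.

Lemma final_ineq (R : realType) (n : nat) (S F N M K u : R) :
  0 < F -> 0 < N -> 0 < M -> 0 < u -> 0 <= S -> 0 <= K ->
  S * F <= M ^+ n -> N * K ^+ n <= 2 ^+ n ->
  S * (K * u / M) ^+ n <= (F * N)^-1 * (2 ^+ n * u ^+ n).
Proof.
move=> F0 N0 M0 u0 S0 K0 h1 h2.
have Mn : 0 < M ^+ n by apply: exprn_gt0.
have Un : 0 < u ^+ n by apply: exprn_gt0.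
have Kn : 0 <= K ^+ n by apply: exprn_ge0.
rewrite !exprMn exprVn.
rewrite [X in _ <= X]mulrC ler_pdivlMr ?mulr_gt0 //.
have e : S * (K ^+ n * u ^+ n / M ^+ n) * (F * N) =
   ((S * F) * (N * K ^+ n)) * u ^+ n / M ^+ n by field; rewrite gt_eqF.
rewrite e ler_pdivrMr //.
have -> : 2 ^+ n * u ^+ n * M ^+ n = (M ^+ n * 2 ^+ n) * u ^+ n by ring.
apply: ler_wpM2r; first exact: ltW.
apply: ler_pM => //; apply: mulr_ge0 => //; exact: ltW.
Qed.


Theorem lemma12 (R : realType) (b c : R) (n : nat) :
  (0 < n)%N -> 0 < c ->
  b + ln c - ln n%:R > 1 ->
  (Vol [set x : 'I_n -> R | (forall i, (0 <= x i)%R) /\ (Rb b x < c)%R]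
   <= ((n`! * n)%:R^-1 * ((2 ^+ n * c ^+ n) / (b + ln c - ln n%:R) ^+ n))%:E)%E.
Proof.
move=> n0 c0 L1.
set L := b + ln c - ln n%:R in L1 *.
have L0 : 0 < L by lra.
set t := 69/50 * c / L.
have t0 : 0 < t by rewrite /t; apply: divr_gt0 => //; lra.
have n0' : 0 < n%:R :> R by rewrite ltr0n.
set m := (230 * n)%N.
have m0 : 0 < m%:R :> R by rewrite ltr0n muln_gt0.
set h := t / m%:R.
have h0 : 0 < h by apply: divr_gt0.
set G := gen n m.
pose a := fun (j : nat) (i : 'I_n) => (nth 0%N (nth [::] G j) i)%:R * h.
pose bb := fun (j : nat) (i : 'I_n) => a j i + (if (j < size G)%N then h else 0).
apply: (@le_trans _ _ (\sum_(0 <= k <oo) (box_vol (a k) (bb k))%:E)%E).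
  apply: ereal_inf_lbound; exists a, bb; split => //.
    move=> k i; rewrite /bb lerDl; case: ifP => _ //; exact: ltW.
  move=> x [x0 hx].
  have hs := @contain R b c n x n0 c0 L1 x0 hx.
  pose l := [seq Num.truncn (x i / h) | i <- enum 'I_n].
  have hl : forall i : 'I_n, nth 0%N l i = Num.truncn (x i / h).
    move=> i; rewrite /l (nth_map i) ?size_enum_ord ?ltn_ord //.
    by rewrite nth_ord_enum.
  have lG : l \in G.
    apply: gen_mem; first by rewrite size_map size_enum_ord.
    have : (sumn l)%:R < m%:R :> R.
      rewrite sumnE /l big_map big_enum /= natr_sum.
      apply: le_lt_trans (_ : (\sum_(i < n) x i) / h < _).
        rewrite mulr_suml; apply: ler_sum => i _.
        by have /andP[] := truncn_itv (divr_ge0 (x0 i) (ltW h0)).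
      by rewrite ltr_pdivrMr // /h mulrC divfK ?gt_eqF.
    move=> H; have H2 := ltr_nat R (sumn l) m; rewrite H in H2; exact: ltnW.
  exists (index l G) => //.
  have kG : (index l G < size G)%N by rewrite index_mem.
  move=> i; rewrite /bb /a kG nth_index // hl.
  have /andP[t1 t2] := truncn_itv (divr_ge0 (x0 i) (ltW h0)).
  apply/andP; split.
    by rewrite -ler_pdivlMr.
  by move: (ltW t2); rewrite ler_pdivrMr // -natr1 mulrDl mul1r.
have bv : forall k, box_vol (a k) (bb k) = if (k < size G)%N then h ^+ n else 0.
  move=> k; rewrite /box_vol /bb.
  under eq_bigr => i _ do rewrite (addrC (a k i)) addrK.
  rewrite prodr_const card_ord; case: ifP => // _.
  by rewrite expr0n gtn_eqF.
rewrite (@nneseries_split R _ 0 (size G)); last first.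
  by move=> k _; rewrite lee_fin bv; case: ifP => // _; apply: exprn_ge0; apply: ltW.
rewrite eseries0; last first.
  by move=> k; rewrite add0n bv leqNgt => /negbTE ->.
rewrite adde0 sumEFin lee_fin add0n big_mkord.
under eq_bigr => k _ do rewrite bv ltn_ord.
rewrite sumr_const card_ord -[h ^+ n *+ _]mulr_natl.
have eM : h = 693/500 * (c / L) / (m + n)%:R.
  rewrite /h /t /m natrD natrM; field.
  by rewrite gt_eqF //=; lra.
have hF : 0 < n`!%:R :> R by rewrite ltr0n fact_gt0.
have hM : 0 < (m + n)%:R :> R by rewrite ltr0n addn_gt0 n0 orbT.
have hu : 0 < c / L by apply: divr_gt0.
have hK : 0 <= 693/500 :> R by lra.
have fi := @final_ineq R n (size G)%:R n`!%:R n%:R (m + n)%:R (693/500) (c / L)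
  hF n0' hM hu (ler0n _ _) hK (gen_size R n m) (pow_ineq R n).
rewrite eM; apply: le_trans fi _.
by rewrite natrM expr_div_n -!mulrA.
Qed.
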